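(* For every $m\in\mathbb{Z}_{>0}$, $\alpha(-1)F^m\in C_2(V_L^+)$.
   Context: $L=\mathbb{Z}\alpha$, $\langle\alpha,\alpha\rangle=2k$; $V_L=M(1)\otimes\mathbb{C}[L]$ the lattice VOA, $V_L^+$ the fixed points of the involution $\theta$ lifted from $-1$ on $L$. $F^m=e^{m\alpha}-e^{-m\alpha}$. $C_2(V)$ is the span of $\{v_{-2}u:u,v\in V\}$. *)

(* Defs.v *)
(* Concrete model of the rank-one lattice VOA V_L,
   L = Z alpha, <alpha,alpha> = 2k, over the complex numbers (algC). *)
From HB Require Import structures.
From mathcomp Require Import all_boot all_order all_algebra all_field.
From mathcomp Require Import finmap.
From mathcomp Require Import monalg.

Set Implicit Arguments.
Unset Strict Implicit.
Unset Printing Implicit Defensive.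

Import GRing.Theory Num.Theory.
Local Open Scope ring_scope.

(* A partition [n_1; ...; n_r] (n_1 >= ... >= n_r >= 1) encodes the monomial
   alpha(-n_1) ... alpha(-n_r). *)
Definition is_part (s : seq nat) : bool :=
  sorted (fun a b => (b <= a)%N) s && all (fun x => (0 < x)%N) s.

Definition part := {s : seq nat | is_part s}.

Definition normp (s : seq nat) : seq nat :=
  sort (fun a b => (b <= a)%N) [seq x <- s | (0 < x)%N].

Lemma normpP (s : seq nat) : is_part (normp s).
Proof.
rewrite /is_part /normp; apply/andP; split.
  apply: sort_sorted => a b; exact: leq_total.
by apply/allP => x; rewrite mem_sort mem_filter => /andP[].
Qed.

Definition mkpart (s : seq nat) : part := exist _ (normp s) (normpP s).

(* basis index: (monomial, j) stands for  monomial (x) e^{j alpha} *)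
Definition KL := (part * int)%type.

Definition VL := {malg algC[KL]}.

Definition bv (x : KL) : VL := << x >>.

Definition lin (f : KL -> VL) (v : VL) : VL :=
  \sum_(x <- msupp v) v@_x *: f x.

Definition degK (x : KL) : nat := sumn (val x.1).

(* L_0-weight of a basis vector: deg + <j alpha, j alpha>/2 = deg + k j^2 *)
Definition wtK (k : nat) (p : seq nat) (j : int) : int :=
  (sumn p)%:Z + (k%:Z * j ^+ 2).

(* Heisenberg operators alpha(n), [alpha(m),alpha(n)] = 2k m delta_{m+n,0} *)
Definition alphaB (k : nat) (n : int) (x : KL) : VL :=
  let p := val x.1 in let j := x.2 in
  match n with
  | Posz 0 => ((2 * k)%:R * j%:~R) *: bv x
  | Posz n'.+1 =>
      ((2 * k * n'.+1 * count_mem n'.+1 p)%:R) *: bv (mkpart (rem n'.+1 p), j)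
  | Negz n' => bv (mkpart (n'.+1 :: p), j)
  end.

Definition alpha (k : nat) (n : int) : VL -> VL := lin (alphaB k n).

(* coefficients of exp(sum_{n>=1} A_n y^n) with n A_n = op n (commuting
   operators): a E_a = sum_{n=1}^a op n (E_{a-n}), E_0 = id; the list
   [E_0 w; ...; E_a w]. *)
Fixpoint Elist (op : nat -> VL -> VL) (a : nat) (w : VL) : seq VL :=
  match a with
  | 0 => [:: w]
  | a'.+1 =>
      let l := Elist op a' w in
      rcons l ((a'.+1%:R : algC)^-1 *:
                 \sum_(n < a'.+1) op n.+1 (nth 0 l (a' - n)))
  end.

Definition Ecoef (op : nat -> VL -> VL) (a : nat) (w : VL) : VL :=
  nth 0 (Elist op a w) a.

(* E^-(-beta,z) = exp(sum_{n>0} beta(-n) z^n / n), beta = b alpha *)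
Definition Eminus (k : nat) (b : int) (a : nat) : VL -> VL :=
  Ecoef (fun n v => b%:~R *: alpha k (- (n%:Z)) v) a.

(* coefficient of z^{-c} in E^+(-beta,z) = exp(- sum_{n>0} beta(n) z^{-n}/n) *)
Definition Eplus (k : nat) (b : int) (c : nat) : VL -> VL :=
  Ecoef (fun n v => - (b%:~R *: alpha k (n%:Z) v)) c.

(* q-th mode of e^{b alpha} applied to a basis vector, from
   Y(e^beta,z) = E^-(-beta,z) E^+(-beta,z) e_beta z^beta
   (trivial 2-cocycle, legitimate since <alpha,alpha> = 2k is even). *)
Definition emode (k : nat) (b : int) (q : int) (w : KL) : VL :=
  let p := val w.1 in let j := w.2 in
  \sum_(c < (sumn p).+1)
    let a : int := c%:Z - q - 1 - (2 * k)%:Z * b * j in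
    if (0 <= a) then Eminus k b (absz a) (Eplus k b c (bv (w.1, j + b)))
    else 0.

(* q-th mode of the basis vector alpha(-n_1)...alpha(-n_r) e^{j alpha}
   applied to a basis vector w, via the iterate formula
   (alpha(-n) v)_q = sum_{i>=0} C(n+i-1,i) (alpha(-n-i) v_{q+i}
                                            - (-1)^n v_{q-n-i} alpha(i)).
   The sum is truncated at an index beyond which all terms vanish
   (alpha(i) w = 0 for i > deg w, and v_s w = 0 once its weight is < 0). *)
Fixpoint modeS (k : nat) (p : seq nat) (j : int) (q : int) (w : KL)
    {struct p} : VL :=
  match p with
  | [::] => emode k j q w
  | n :: p' =>
      \sum_(i < (degK w + absz ((wtK k p' j + wtK k (val w.1) w.2 - q)%R)).+1)
        ('C(n + i - 1, i))%:R *: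
          (alpha k (- (n + i)%:Z) (modeS k p' j (q + i%:Z) w)
           - (-1) ^+ n *: lin (modeS k p' j (q - n%:Z - i%:Z))
                              (alpha k i%:Z (bv w)))
  end.

(* v_q u : the q-th mode of Y(v,z) = sum_q v_q z^{-q-1}, bilinear in v, u *)
Definition mode (k : nat) (v : VL) (q : int) (u : VL) : VL :=
  \sum_(x <- msupp v) \sum_(y <- msupp u)
     (v@_x * u@_y) *: modeS k (val x.1) x.2 q y.

(* the involution theta: alpha(-n) |-> -alpha(-n), e^{j alpha} |-> e^{-j alpha} *)
Definition thetaB (x : KL) : VL := (-1) ^+ size (val x.1) *: bv (x.1, - x.2).
Definition theta : VL -> VL := lin thetaB.

Definition VLplus (v : VL) : Prop := theta v = v.

Definition C2plus (k : nat) (w : VL) : Prop :=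
  exists s : seq (algC * VL * VL),
    (forall t, t \in s -> VLplus t.1.2 /\ VLplus t.2) /\
    w = \sum_(t <- s) t.1.1 *: mode k t.1.2 (-2) t.2.

Definition Fm (m : int) : VL := bv (mkpart [::], m) - bv (mkpart [::], - m).

(* Main.v *)
Require Import Defs.
From HB Require Import structures.
From mathcomp Require Import all_boot all_order all_algebra all_field.
From mathcomp Require Import finmap.
From mathcomp Require Import monalg.
From mathcomp Require Import ring.
Import GRing.Theory Num.Theory.
Local Open Scope ring_scope.


Definition lsum (G : KL -> VL) (v : VL) : VL := \sum_(x <- msupp v) v@_x *: G x.

Lemma lsumEw G v (d : {fset KL}) : (msupp v `<=` d)%fset ->
  lsum G v = \sum_(x <- d) v@_x *: G x.
Proof.
move=> le; rewrite /lsum (big_fset_incl _ le) => //= x xd /mcoeff_outdom ->.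
by rewrite scale0r.
Qed.

Lemma lsumD G v w : lsum G (v + w) = lsum G v + lsum G w.
Proof.
rewrite (@lsumEw G (v + w) (msupp v `|` msupp w)%fset) ?msuppD_le //.
rewrite (@lsumEw G v (msupp v `|` msupp w)%fset) ?fsubsetUl //.
rewrite (@lsumEw G w (msupp v `|` msupp w)%fset) ?fsubsetUr //.
by rewrite -big_split /=; apply: eq_bigr => x _; rewrite mcoeffD scalerDl.
Qed.

Lemma lsumN G v : lsum G (- v) = - lsum G v.
Proof.
rewrite /lsum msuppN -sumrN; apply: eq_bigr => x _.
by rewrite mcoeffN scaleNr.
Qed.

Lemma lsumU G x : lsum G (bv x) = G x.
Proof. by rewrite /lsum /bv msuppU oner_eq0 big_seq_fset1 mcoeffUU scale1r. Qed.

Lemma modeE k v q u :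
  mode k v q u = lsum (fun x => \sum_(y <- msupp u) u@_y *: modeS k (val x.1) x.2 q y) v.
Proof.
rewrite /mode /lsum; apply: eq_bigr => x _; rewrite scaler_sumr.
by apply: eq_bigr => y _; rewrite scalerA.
Qed.

Definition vac : KL := (mkpart [::], 0).
Definition p1 : part := mkpart [:: 1%N].

Lemma emode_vac k (b : int) :
  emode k b (-2) vac = b%:~R *: bv (p1, b).
Proof.
rewrite /emode /= big_ord1.
have -> : ((0%N : nat)%:Z - (-2) - 1 - (2 * k)%:Z * b * (0 : int)) = 1 by ring.
rewrite /= /Eminus /Eplus /Ecoef /= big_ord1 invr1 scale1r add0r.
rewrite /alpha. change (lin ?f ?v) with (lsum f v). rewrite lsumU. by [].
Qed.

Lemma alpha_vac k (b : int) : alpha k (-1) (bv (mkpart [::], b)) = bv (p1, b).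
Proof. rewrite /alpha. change (lin ?f ?v) with (lsum f v). Time rewrite lsumU.
have -> : (-1 : int) = Negz 0 by rewrite NegzE.
by [].
Qed.

Lemma theta_bv x : theta (bv x) = thetaB x.
Proof. rewrite /theta. Time change (lin ?f ?v) with (lsum f v). Time rewrite lsumU. by []. Qed.

Lemma theta_add v w : theta (v + w) = theta v + theta w.
Proof. rewrite /theta. change (lin ?f ?v) with (lsum f v). Time rewrite lsumD. Time by []. Qed.

Lemma alpha_sub k v w : alpha k (-1) (v - w) = alpha k (-1) v - alpha k (-1) w.
Proof. rewrite /alpha. change (lin ?f ?v) with (lsum f v). Time rewrite lsumD lsumN. Time by []. Qed.

Lemma T2 x y : theta (bv x) + theta (bv y) = thetaB x + thetaB y.
Proof. Timeout 10 congr (_ + _). Timeout 10 exact: theta_bv. Timeout 10 exact: theta_bv. Timeout 20 Qed.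

Lemma thetaB0 (p : part) (j : int) : size (val p) = 0%N -> thetaB (p, j) = bv (p, - j).
Proof.
Timeout 10 by move=> hp; rewrite /thetaB hp expr0 scale1r.
Timeout 30 Qed.

Lemma VLplus_pair (p : part) (j : int) : size (val p) = 0%N ->
  VLplus (bv (p, j) + bv (p, - j)).
Proof.
Timeout 10 move=> hp; rewrite /VLplus.
Timeout 10 apply: etrans (theta_add _ _) _.
Timeout 10 apply: etrans (T2 _ _) _.
Timeout 10 apply: etrans (addrC _ _) _.
Timeout 10 congr (_ + _).
  Timeout 10 by rewrite (thetaB0 _ _ hp) opprK.
Timeout 10 exact: thetaB0.
Timeout 30 Qed.

Lemma VLplus_bv (p : part) : size (val p) = 0%N -> VLplus (bv (p, 0)).
Proof.
Timeout 10 move=> hp; rewrite /VLplus theta_bv (thetaB0 _ _ hp).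
Timeout 10 by rewrite oppr0.
Timeout 30 Qed.

Lemma mode2 k a b q c : mode k (bv a + bv b) q (bv c) =
  modeS k (val a.1) a.2 q c + modeS k (val b.1) b.2 q c.
Proof.
Timeout 10 rewrite modeE; apply: etrans (lsumD _ _ _) _.
Timeout 10 congr (_ + _).
  Timeout 10 apply: etrans (lsumU _ _) _; exact: lsumU.
Timeout 10 apply: etrans (lsumU _ _) _; exact: lsumU.
Timeout 30 Qed.

Lemma scale_comb_gen (V : lmodType algC) (b : int) (u w : V) : (b%:~R : algC) != 0 ->
  (b%:~R : algC)^-1 *: (b%:~R *: u + (- b)%:~R *: w) = u - w.
Proof.
move=> hb; rewrite intrN scalerDr !scalerA mulrN mulVf // scaleNr !scale1r.
by [].
Qed.

Lemma scale_comb (b : int) (u w : VL) : (b%:~R : algC) != 0 ->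
  (b%:~R : algC)^-1 *: (b%:~R *: u + (- b)%:~R *: w) = u - w.
Proof. move=> hb. Timeout 20 exact: scale_comb_gen. Qed.

Definition p0 : part := mkpart [::].

Lemma final k (b : int) : (b%:~R : algC) != 0 ->
  (b%:~R : algC)^-1 *: mode k (bv (p0, b) + bv (p0, - b)) (-2) (bv vac) =
  alpha k (-1) (bv (p0, b) - bv (p0, - b)).
Proof.
move=> hb.
Timeout 10 rewrite mode2.
Timeout 10 transitivity ((b%:~R : algC)^-1 *: (b%:~R *: bv (p1, b) + (- b)%:~R *: bv (p1, - b))).
  Timeout 10 congr (_ *: _).
  Timeout 10 congr (_ + _).
    Timeout 10 exact: emode_vac.
  Timeout 10 exact: emode_vac.
Timeout 10 apply: etrans (scale_comb _ _ _ hb) _.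
Timeout 10 symmetry; apply: etrans (alpha_sub _ _ _) _.
Timeout 10 congr (_ - _).
  Timeout 10 exact: alpha_vac.
Timeout 10 exact: alpha_vac.
Timeout 30 Qed.

Theorem lemma4p6 (k : nat) (hk : (0 < k)%N) (m : nat) (hm : (0 < m)%N) :
  C2plus k (alpha k (-1) (Fm m%:Z)).
Proof.
have hp : size (val p0) = 0%N by [].
have hb : ((m%:Z)%:~R : algC) != 0 by rewrite intr_eq0 eqz_nat -lt0n.
exists [:: (((m%:Z)%:~R : algC)^-1, bv (p0, m%:Z) + bv (p0, - m%:Z), bv vac)]; split.
  move=> t; rewrite inE => /eqP ->; split.
    Timeout 10 exact: VLplus_pair.
  Timeout 10 exact: VLplus_bv.
Timeout 10 symmetry; apply: etrans (big_seq1 _ _ _) _.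
Timeout 10 exact: final.
Timeout 30 Qed.
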